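(* Let $A$ be an $\mathbb{R}$-algebra and $B$ an $A$-algebra. If $B$ has the substitution property over $A$ along algebraic formal arcs or along algebraic Puiseux arcs, then $B$ has the weak substitution property on points over $A$.
   Context: $\mathbb{R}[[t]]_{\mathrm{alg}}$ is the ring of formal power series in $t$ algebraic over $\mathbb{R}[t]$; $\mathbb{R}[[t^*]]_{\mathrm{alg}}$ is the ring of Puiseux series $\sum_{i\ge0}a_it^{i/m}$ of non-negative order algebraic over $\mathbb{R}[t]$. $B$ has the substitution property along algebraic formal (resp. Puiseux) arcs if every morphism $A\to\mathbb{R}[[t]]_{\mathrm{alg}}$ (resp. $A\to\mathbb{R}[[t^*]]_{\mathrm{alg}}$) admits one and only one lifting to $B$ (a morphism from $B$ whose composition with the structure map $A\to B$ is the given one). $B$ has the weak substitution property over $A$ if every morphism $A\to\mathbb{R}$ admits one and only one lifting to $B$. *)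

(* Defs.v *)
From HB Require Import structures.
From mathcomp Require Import all_boot all_order all_algebra.
From mathcomp Require Export reals.
Set Implicit Arguments. Unset Strict Implicit. Unset Printing Implicit Defensive.
Import Order.TTheory GRing.Theory Num.Theory.
Local Open Scope ring_scope.

Section Defs.
Variable R : realType.

Definition ralg_hom (A B : algType R) (f : A -> B) : Prop :=
  [/\ f 1 = 1, forall a b, f (a + b) = f a + f b,
      forall a b, f (a * b) = f a * f b & forall (c : R) a, f (c *: a) = c *: f a].

Definition fps := nat -> R.
Definition fps_zero : fps := fun _ => 0.
Definition fps_one : fps := fun n => if n == 0%N then 1 else 0.
Definition fps_add (f g : fps) : fps := fun n => f n + g n.
Definition fps_scale (c : R) (f : fps) : fps := fun n => c * f n.
Definition fps_mul (f g : fps) : fps :=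
  fun n => \sum_(i < n.+1) f i * g (n - i)%N.
Definition fps_exp (f : fps) (k : nat) : fps := iter k (fps_mul f) fps_one.
Definition fps_of_poly (p : {poly R}) : fps := fun n => p`_n.
Definition fps_eval (P : {poly {poly R}}) (y : fps) : fps :=
  \big[fps_add/fps_zero]_(j < size P) fps_mul (fps_of_poly P`_j) (fps_exp y j).
Definition fps_algebraic (y : fps) : Prop :=
  exists P : {poly {poly R}}, P != 0 /\ forall n, fps_eval P y n = 0.

Definition fps_arc (A : algType R) (f : A -> fps) : Prop :=
  [/\ forall n, f 1 n = fps_one n,
      forall a b n, f (a + b) n = fps_add (f a) (f b) n,
      forall a b n, f (a * b) n = fps_mul (f a) (f b) n,
      forall (c : R) a n, f (c *: a) n = fps_scale c (f a) n
    & forall a, fps_algebraic (f a)].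

(* ---------- Puiseux series R[[t^*]] of nonnegative order ------------------
   A pair (d, f) represents  sum_i f i * t^(i/(d+1)).  Two representatives
   denote the same Puiseux series iff they have the same coefficient at every
   rational exponent (pcoef). *)
Definition pser := (nat * fps)%type.
Definition pcoef (p : pser) (q : rat) : R :=
  let x := q * (p.1.+1)%:R in
  if x \is a Num.nat then p.2 (Num.truncn x) else 0.
Definition peq (p q : pser) : Prop := forall r : rat, pcoef p r = pcoef q r.
(* reindex a series in t^(1/m) as a series in t^(1/(k m)) *)
Definition spread (k : nat) (f : fps) : fps :=
  fun i => if (k %| i)%N then f (i %/ k)%N else 0.
Definition pzero : pser := (0%N, fps_zero).
Definition pone : pser := (0%N, fps_one).
Definition padd (p q : pser) : pser :=
  ((p.1.+1 * q.1.+1).-1, fps_add (spread q.1.+1 p.2) (spread p.1.+1 q.2)).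
Definition pmul (p q : pser) : pser :=
  ((p.1.+1 * q.1.+1).-1, fps_mul (spread q.1.+1 p.2) (spread p.1.+1 q.2)).
Definition pscale (c : R) (p : pser) : pser := (p.1, fps_scale c p.2).
Definition pexp (p : pser) (k : nat) : pser := iter k (pmul p) pone.
Definition pser_of_poly (p : {poly R}) : pser := (0%N, fps_of_poly p).
Definition pser_eval (P : {poly {poly R}}) (y : pser) : pser :=
  \big[padd/pzero]_(j < size P) pmul (pser_of_poly P`_j) (pexp y j).
Definition pser_algebraic (y : pser) : Prop :=
  exists P : {poly {poly R}}, P != 0 /\ peq (pser_eval P y) pzero.

Definition pser_arc (A : algType R) (f : A -> pser) : Prop :=
  [/\ peq (f 1) pone,
      forall a b, peq (f (a + b)) (padd (f a) (f b)),
      forall a b, peq (f (a * b)) (pmul (f a) (f b)),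
      forall (c : R) a, peq (f (c *: a)) (pscale c (f a))
    & forall a, pser_algebraic (f a)].

Definition subst_fps (A B : algType R) (phi : A -> B) : Prop :=
  forall f : A -> fps, fps_arc f ->
    (exists g : B -> fps, fps_arc g /\ forall a n, g (phi a) n = f a n) /\
    (forall g1 g2 : B -> fps, fps_arc g1 -> fps_arc g2 ->
       (forall a n, g1 (phi a) n = f a n) -> (forall a n, g2 (phi a) n = f a n) ->
       forall b n, g1 b n = g2 b n).

Definition subst_pser (A B : algType R) (phi : A -> B) : Prop :=
  forall f : A -> pser, pser_arc f ->
    (exists g : B -> pser, pser_arc g /\ forall a, peq (g (phi a)) (f a)) /\
    (forall g1 g2 : B -> pser, pser_arc g1 -> pser_arc g2 ->
       (forall a, peq (g1 (phi a)) (f a)) -> (forall a, peq (g2 (phi a)) (f a)) ->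
       forall b, peq (g1 b) (g2 b)).

Definition weak_subst (A B : algType R) (phi : A -> B) : Prop :=
  forall f : A -> R^o, ralg_hom f ->
    (exists g : B -> R^o, ralg_hom g /\ forall a, g (phi a) = f a) /\
    (forall g1 g2 : B -> R^o, ralg_hom g1 -> ralg_hom g2 ->
       (forall a, g1 (phi a) = f a) -> (forall a, g2 (phi a) = f a) ->
       forall b, g1 b = g2 b).

End Defs.

(* Main.v *)
Require Import Defs.
From mathcomp Require Import all_boot all_order all_algebra reals.
From mathcomp Require Import boolp.
Import GRing.Theory Num.Theory.
Local Open Scope ring_scope.

Section Aux.
Variable R : realType.

Definition cst (c : R) : fps R := fun n => if n == 0%N then c else 0.

Lemma cst_add a b : fps_add (cst a) (cst b) = cst (a + b).
Proof. by apply: funext => n; rewrite /fps_add /cst; case: eqP => _; rewrite ?addr0. Qed.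

Lemma cst_mul a b : fps_mul (cst a) (cst b) = cst (a * b).
Proof.
apply: funext => n; rewrite /fps_mul /cst; case: n => [|n].
  by rewrite big_ord1.
rewrite /= big1 // => -[[|i] Hi] _ /=; first by rewrite mulr0.
by rewrite mul0r.
Qed.

Lemma cst_scale c a : fps_scale c (cst a) = cst (c * a).
Proof. by apply: funext => n; rewrite /fps_scale /cst; case: eqP; rewrite ?mulr0. Qed.

Lemma cst_zero : fps_zero R = cst 0.
Proof. by apply: funext => n; rewrite /cst; case: eqP. Qed.

Lemma fps_of_polyC a : fps_of_poly (a%:P) = cst a.
Proof. by apply: funext => n; rewrite /fps_of_poly coefC. Qed.

Lemma spread1 (f : fps R) : spread 1 f = f.
Proof. by apply: funext => n; rewrite /spread dvd1n divn1. Qed.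

Definition pcst (c : R) : pser R := (0%N, cst c).

Lemma pcst_add a b : padd (pcst a) (pcst b) = pcst (a + b).
Proof. by rewrite /padd /pcst /= !spread1 cst_add. Qed.

Lemma pcst_mul a b : pmul (pcst a) (pcst b) = pcst (a * b).
Proof. by rewrite /pmul /pcst /= !spread1 cst_mul. Qed.

Lemma pcoef0 (p : pser R) : pcoef p 0 = p.2 0%N.
Proof. by rewrite /pcoef mul0r nat_num0 truncn0. Qed.

Lemma pser_of_polyC x : pser_of_poly x%:P = pcst x.
Proof. by rewrite /pser_of_poly fps_of_polyC. Qed.

Definition Ypoly (c : R) : {poly {poly R}} := 'X - (c%:P)%:P.

Lemma Ypoly_size c : size (Ypoly c) = 2%N.
Proof. by rewrite /Ypoly size_XsubC. Qed.

Lemma Ypoly_nz c : Ypoly c != 0.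
Proof. by rewrite -size_poly_eq0 Ypoly_size. Qed.

Lemma Ypoly0 c : (Ypoly c)`_0 = (- c)%:P.
Proof. by rewrite /Ypoly coefB coefX coefC /= sub0r polyCN. Qed.

Lemma Ypoly1 c : (Ypoly c)`_1 = 1%:P.
Proof. by rewrite /Ypoly coefB coefX coefC /= subr0. Qed.

Lemma cst_alg c : fps_algebraic (cst c).
Proof.
exists (Ypoly c); split; first exact: Ypoly_nz.
move=> n; rewrite /fps_eval Ypoly_size !big_ord_recl big_ord0 /=.
rewrite (_ : bump 0 0 = 1%N) // Ypoly1.
rewrite Ypoly0 !fps_of_polyC /fps_exp /= cst_zero.
have -> : fps_one R = cst 1 by [].
rewrite !cst_mul !cst_add /cst; case: eqP => // _.
by rewrite !mulr1 mul1r addr0; exact: addNr.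
Qed.

Lemma pcst_alg c : pser_algebraic (pcst c).
Proof.
exists (Ypoly c); split; first exact: Ypoly_nz.
rewrite /pser_eval Ypoly_size !big_ord_recl big_ord0 /=.
rewrite (_ : bump 0 0 = 1%N) // Ypoly1.
rewrite Ypoly0 /pexp /=.
rewrite !pser_of_polyC.
have -> : pzero R = pcst 0 by rewrite /pzero cst_zero.
have -> : pone R = pcst 1 by [].
rewrite !pcst_mul !pcst_add !mulr1 mul1r addr0 (_ : -c + c = 0); [by move=> r|exact: addNr].
Qed.

Lemma cst_arc (C : algType R) (h : C -> R^o) : ralg_hom h -> fps_arc (fun x => cst (h x)).
Proof.
case=> h1 hD hM hZ; split.
- by move=> n; rewrite h1.
- by move=> a b n; rewrite cst_add hD.
- by move=> a b n; rewrite cst_mul hM.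
- by move=> c a n; rewrite cst_scale hZ.
- by move=> a; apply: cst_alg.
Qed.

Lemma pcst_arc (C : algType R) (h : C -> R^o) : ralg_hom h -> pser_arc (fun x => pcst (h x)).
Proof.
case=> h1 hD hM hZ; split.
- by rewrite h1.
- by move=> a b r; rewrite pcst_add hD.
- by move=> a b r; rewrite pcst_mul hM.
- by move=> c a r; rewrite /pscale /pcst /= cst_scale hZ.
- by move=> a; apply: pcst_alg.
Qed.

Lemma arc_hom (C : algType R) (G : C -> fps R) : fps_arc G -> ralg_hom (fun b => (G b 0%N : R^o)).
Proof.
case=> G1 GD GM GZ _; split.
- by rewrite G1.
- by move=> a b; rewrite GD.
- by move=> a b; rewrite GM /fps_mul big_ord1.
- by move=> c a; rewrite GZ.
Qed.

Lemma parc_hom (C : algType R) (G : C -> pser R) : pser_arc G -> ralg_hom (fun b => ((G b).2 0%N : R^o)).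
Proof.
case=> G1 GD GM GZ _; split.
- by move: (G1 0); rewrite !pcoef0.
- by move=> a b; move: (GD a b 0); rewrite !pcoef0 => -> /=; rewrite /fps_add /spread !dvdn0 !div0n.
- by move=> a b; move: (GM a b 0); rewrite !pcoef0 => -> /=; rewrite /fps_mul big_ord1 /spread !dvdn0 !div0n.
- by move=> c a; move: (GZ c a 0); rewrite !pcoef0 => ->.
Qed.

End Aux.

Theorem proposition3p3 (R : realType) (A B : comAlgType R) (phi : A -> B) :
  ralg_hom phi ->
  subst_fps phi \/ subst_pser phi ->
  weak_subst phi.
Proof.
move=> _ [Hs|Hs] f hf.
- have [[G [GA GL]] U] := Hs _ (@cst_arc R _ _ hf).
  split.
    exists (fun b => G b 0%N); split; first exact: arc_hom.
    by move=> a; rewrite GL.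
  move=> g1 g2 h1 h2 L1 L2 b.
  have := U _ _ (@cst_arc R _ _ h1) (@cst_arc R _ _ h2) _ _ b 0%N.
  apply => a n; by rewrite ?L1 ?L2.
- have [[G [GA GL]] U] := Hs _ (@pcst_arc R _ _ hf).
  split.
    exists (fun b => (G b).2 0%N); split; first exact: parc_hom.
    by move=> a; rewrite -pcoef0 GL pcoef0.
  move=> g1 g2 h1 h2 L1 L2 b.
  have := U _ _ (@pcst_arc R _ _ h1) (@pcst_arc R _ _ h2) _ _ b 0.
  rewrite !pcoef0; apply => a r; by rewrite ?L1 ?L2.
Qed.
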